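(* For every integer $n \geq 1$, the number $R(n)$ of Riordan paths of length $n$ satisfies $$R(n) = \sum_{k=1}^{\lfloor n/2 \rfloor} f^{(k,k,1^{n-2k})}.$$
   Context: A Motzkin path of length $n$ is a lattice path from $(0,0)$ to $(n,0)$ using steps $U=(1,1)$, $F=(1,0)$, $D=(1,-1)$ that never goes below the $x$-axis. A Riordan path is a Motzkin path with no flat step $F$ on the $x$-axis. $R(n)$ is the number of Riordan paths of length $n$ (the Riordan numbers). $f^\mu$ denotes the number of standard Young tableaux of shape $\mu$, and $(k,k,1^{j})$ is the partition with two parts equal to $k$ followed by $j$ parts equal to $1$. *)

(* Defs.v *)
From HB Require Import structures.
From mathcomp Require Import all_boot all_order all_algebra.
Set Implicit Arguments. Unset Strict Implicit. Unset Printing Implicit Defensive.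
Import GRing.Theory Num.Theory.

Inductive step := U | F | D.

Definition step_code (s : step) : 'I_3 :=
  match s with U => inord 0 | F => inord 1 | D => inord 2 end.
Definition step_decode (i : 'I_3) : step :=
  match val i with 0 => U | 1 => F | _ => D end.
Lemma step_codeK : cancel step_code step_decode.
Proof. by case; rewrite /step_decode /= inordK. Qed.
HB.instance Definition _ := Finite.copy step (can_type step_codeK).

Definition dy (s : step) : int :=
  match s with U => 1 | F => 0 | D => -1 end.

Definition height (p : seq step) : int := \sum_(s <- p) dy s.

Definition motzkin (p : seq step) : bool :=
  [forall i : 'I_(size p).+1, (0 <= height (take i p))%R] && (height p == 0).

Definition riordan (p : seq step) : bool :=
  motzkin p &&
  [forall i : 'I_(size p), (nth U p i == F) ==> (height (take i p) != 0)].

Definition riordan_number (n : nat) : nat :=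
  #|[set t : n.-tuple step | riordan t]|.

(* A partition is given as a weakly decreasing seq of positive parts;
   its Young diagram has cells (i,j) with i < size la and j < la_i. *)
Definition in_diagram (la : seq nat) (i j : nat) : bool :=
  (i < size la) && (j < nth 0 la i).

(* A standard Young tableau of shape la (with N = sumn la cells) is encoded as
   a function on the bounding box 'I_(size la) * 'I_(la_0) with values in
   'I_N.+1: it is 0 outside the diagram, takes values in {1..N} injectively on
   the diagram (hence bijectively, the diagram having N cells), and is
   strictly increasing along rows and down columns. *)
Definition is_syt (la : seq nat)
  (T : {ffun 'I_(size la) * 'I_(nth 0 la 0) -> 'I_(sumn la).+1}) : bool :=
  [forall c : 'I_(size la) * 'I_(nth 0 la 0),
     if in_diagram la c.1 c.2 then 0 < T c else val (T c) == 0] &&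
  [forall c1 : 'I_(size la) * 'I_(nth 0 la 0), forall c2 : 'I_(size la) * 'I_(nth 0 la 0),
     (in_diagram la c1.1 c1.2 && in_diagram la c2.1 c2.2 && (T c1 == T c2))
       ==> (c1 == c2)] &&
  [forall c1 : 'I_(size la) * 'I_(nth 0 la 0), forall c2 : 'I_(size la) * 'I_(nth 0 la 0),
     (in_diagram la c1.1 c1.2 && in_diagram la c2.1 c2.2 &&
      (((val c1.1 == val c2.1) && (val c1.2 < val c2.2)) ||
       ((val c1.2 == val c2.2) && (val c1.1 < val c2.1))))
       ==> (val (T c1) < val (T c2))].

Definition num_syt (la : seq nat) : nat := #|[set T | @is_syt la T]|.

Definition kk1 (k j : nat) : seq nat := [:: k, k & nseq j 1].

(* Main.v *)
Require Import Defs.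
From mathcomp Require Import all_boot all_order all_algebra zify.
Set Implicit Arguments. Unset Strict Implicit. Unset Printing Implicit Defensive.


Definition isU (x : step) := if x is U then true else false.
Definition isD (x : step) := if x is D then true else false.
Definition isF (x : step) := if x is F then true else false.

Fixpoint pos (P : step -> bool) (c : nat) (w : seq step) : nat :=
  if w is y :: q then
    if P y then (if c is c'.+1 then (pos P c' q).+1 else 0) else (pos P c q).+1
  else 0.

Lemma posL P w i j :
  (j < count P (take i w)) = (j < count P w) && (pos P j w < i).
Proof.
elim: w i j => [|y q IH] i j /=; first by case: i; rewrite ?andbF.
case: i => [|i] /=; first by rewrite andbF.
case: (P y) => /=.
  by case: j => [|j]; rewrite ?add1n ?ltnS // IH.
by rewrite !add0n IH ltnS.
Qed.

Lemma pos_size P w c : c < count P w -> pos P c w < size w.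
Proof. by move=> h; have := posL P w (size w) c; rewrite take_size h /= => <-. Qed.

Lemma pos_nth P w c : c < count P w -> P (nth U w (pos P c w)).
Proof.
elim: w c => [|y q IH] c //=.
case Py: (P y) => /=; last by rewrite add0n; apply: IH.
by case: c => [|c] //=; rewrite add1n ltnS; apply: IH.
Qed.

Lemma count_take_pos P w c : c < count P w -> count P (take (pos P c w) w) = c.
Proof.
elim: w c => [|y q IH] c //=.
case Py: (P y) => /=; last by rewrite /= Py !add0n; apply: IH.
by case: c => [|c] //=; rewrite /= Py !add1n ltnS => h; rewrite IH.
Qed.

Lemma pos_lt P w c c' : c < c' -> c' < count P w -> pos P c w < pos P c' w.
Proof.
move=> hcc hc'; have := posL P w (pos P c' w) c.
rewrite count_take_pos // hcc => /esym /andP [] //.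
Qed.

Lemma pos_le P w c c' : c <= c' -> c' < count P w -> pos P c w <= pos P c' w.
Proof.
rewrite leq_eqVlt => /orP [/eqP -> //|h1] h2; exact/ltnW/pos_lt.
Qed.

Lemma pos_inj P w c c' : c < count P w -> c' < count P w ->
  pos P c w = pos P c' w -> c = c'.
Proof.
move=> h1 h2 e; case: (ltngtP c c') => // h.
  by have := pos_lt h h2; rewrite e ltnn.
by have := pos_lt h h1; rewrite e ltnn.
Qed.

Lemma pos_of (P : pred step) w m : m < size w -> P (nth U w m) ->
  count P (take m w) < count P w /\ pos P (count P (take m w)) w = m.
Proof.
elim: w m => [|y q IH] m //=.
case: m => [|m] /=.
  by move=> _ ->; rewrite add1n.
rewrite ltnS => hm hP; have [h1 h2] := IH m hm hP.
case: (P y) => /=; by rewrite ?add1n ?add0n ?ltnS h2.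
Qed.

Lemma count3 w : count isU w + count isD w + count isF w = size w.
Proof. elim: w => [|[] q IH] //=; lia. Qed.

Lemma all_iotaS (f : nat -> bool) m :
  all f (iota 0 m.+1) = f 0 && all (fun i => f i.+1) (iota 0 m).
Proof.
rewrite /=; congr andb.
suff H : forall n, all f (iota n.+1 m) = all (fun i => f i.+1) (iota n m) by apply: H.
by elim: m => [|m IH] n //=; rewrite IH.
Qed.

Arguments iota : simpl never.

Fixpoint mok (h : nat) (p : seq step) : bool :=
  if p is x :: q then
    match x with U => mok h.+1 q | F => mok h q | D => (h != 0) && mok h.-1 q end
  else h == 0.

Fixpoint wok (a : nat) (p : seq step) : bool :=
  if p is x :: q then
    match x with U => wok a.+1 q | F => false | D => (a != 0) && mok a.-1 q end
  else a == 0.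

Fixpoint rok (h : nat) (p : seq step) : bool :=
  if p is x :: q then
    match x with U => rok h.+1 q | F => (h != 0) && rok h q
               | D => (h != 0) && rok h.-1 q end
  else h == 0.

Lemma mokE h p : mok h p =
  all (fun i => count isD (take i p) <= h + count isU (take i p)) (iota 0 (size p).+1)
  && (h + count isU p == count isD p).
Proof.
elim: p h => [|x q IH] h; first by rewrite /iota /= addn0 ?andbT.
rewrite all_iotaS take0 leq0n andTb.
case: x; rewrite [mok _ _]/=.
- rewrite IH; congr andb; last by rewrite /= add0n add1n addnS addSn.
  by apply: eq_all => i /=; rewrite add0n add1n addnS addSn.
- rewrite IH; congr andb; try by rewrite /= !add0n.
- case: h => [|h].
    by rewrite all_iotaS /= take0.
  rewrite /= IH; congr andb; try by rewrite add0n add1n addSn eqSS.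
Qed.

Lemma wokE a p : wok a p =
  (all (fun i => count isD (take i p) <= a + count isU (take i p)) (iota 0 (size p).+1)
  && (a + count isU p == count isD p))
  && all (fun i => isF (nth U p i) ==> (0 < count isD (take i p))) (iota 0 (size p)).
Proof.
elim: p a => [|x q IH] a; first by rewrite /iota /= addn0 ?andbT.
rewrite [X in _ && X]all_iotaS all_iotaS take0 leq0n andTb.
case: x; rewrite [wok _ _]/=.
- rewrite IH; congr andb; first congr andb;
   try (by apply: eq_all => i /=; rewrite ?add0n ?add1n ?addnS ?addSn);
   try by rewrite /= ?add0n add1n addnS addSn.
- by rewrite /= !andbF.
- case: a => [|a].
    by rewrite all_iotaS /= take0.
  have -> : all (fun i => isF (nth U (D :: q) i.+1) ==> (0 < count isD (take i.+1 (D :: q)))) (iota 0 (size q)) = true.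
    by apply/allP => i _; rewrite /= add1n implybT.
  rewrite /= andbT mokE; congr andb; try by rewrite add0n add1n addSn eqSS.
Qed.

Lemma mem_iota0 i m : (i \in iota 0 m) = (i < m).
Proof. by rewrite mem_iota add0n. Qed.

Lemma UD_disj w c c' : c < count isU w -> c' < count isD w ->
  pos isU c w <> pos isD c' w.
Proof.
move=> h1 h2 e; have := pos_nth h1; have := pos_nth h2; rewrite e.
by case: (nth U w _).
Qed.

Lemma DF_disj w c c' : c < count isD w -> c' < count isF w ->
  pos isD c w <> pos isF c' w.
Proof.
move=> h1 h2 e; have := pos_nth h1; have := pos_nth h2; rewrite e.
by case: (nth U w _).
Qed.

Lemma UF_disj w c c' : c < count isU w -> c' < count isF w ->
  pos isU c w <> pos isF c' w.
Proof.
move=> h1 h2 e; have := pos_nth h1; have := pos_nth h2; rewrite e.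
by case: (nth U w _).
Qed.

Definition Pos (w : seq step) : Prop :=
  [/\ count isU w = count isD w,
      forall t, t < count isU w -> pos isU t w < pos isD t w &
      0 < count isF w -> 0 < count isD w /\ pos isD 0 w < pos isF 0 w].

Lemma wok_Pos w : wok 0 w -> Pos w.
Proof.
rewrite wokE => /andP [/andP [/allP Hb /eqP Hbal] /allP HF].
rewrite add0n in Hbal.
split => //.
- move=> t ht; have htD : t < count isD w by rewrite -Hbal.
  set i := (pos isD t w).+1.
  have hs : i <= size w := pos_size htD.
  have hb := Hb i; rewrite mem_iota0 ltnS in hb; have {}hb := hb hs.
  have h1 : t < count isD (take i w) by rewrite posL htD ltnSn.
  have h2 : t < count isU (take i w).
    by rewrite -(add0n (count isU _)); exact: leq_trans h1 hb.
  move: h2; rewrite posL => /andP [hu]; rewrite ltnS leq_eqVlt => /orP [/eqP e|//].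
  by case: (UD_disj hu htD e).
- move=> hF.
  have hs := pos_size hF.
  have := HF (pos isF 0 w); rewrite mem_iota0 hs (pos_nth hF) /= => /(_ isT).
  by rewrite posL => /andP [-> ->].
Qed.

Lemma Pos_wok w : Pos w -> wok 0 w.
Proof.
case=> Hbal Hpos HF.
rewrite wokE; apply/andP; split; [apply/andP; split|].
- apply/allP => i _; rewrite add0n.
  case E: (count isD (take i w)) => [//|d].
  have : d < count isD (take i w) by rewrite E.
  rewrite posL => /andP [hd hp]; have hu : d < count isU w by rewrite Hbal.
  have hlt := Hpos d hu.
  have : d < count isU (take i w) by rewrite posL hu (ltn_trans hlt hp).
  done.
- by rewrite add0n Hbal.
- apply/allP => i; rewrite mem_iota0 => hi; apply/implyP => hF.
  have [hc hp] := pos_of hi hF.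
  have [hD hDF] := HF (leq_ltn_trans (leq0n _) hc).
  rewrite posL hD /= -hp.
  exact: (leq_trans hDF (pos_le (leq0n _) hc)).
Qed.

Lemma wok_PosE w : wok 0 w <-> Pos w.
Proof. by split; [apply: wok_Pos | apply: Pos_wok]. Qed.

Import GRing.Theory Num.Theory.

Lemma eqFE x : (x == F) = isF x.
Proof. by apply/eqP/idP; case: x. Qed.

Lemma heightC x s : height (x :: s) = (dy x + height s)%R.
Proof. by rewrite /height big_cons. Qed.

Lemma height0 : height [::] = 0%R.
Proof. by rewrite /height big_nil. Qed.

Lemma rokE h p : rok h p =
  all (fun i => (0 <= h%:Z + height (take i p))%R) (iota 0 (size p).+1)
  && (h%:Z + height p == 0)%R
  && all (fun i => isF (nth U p i) ==> (h%:Z + height (take i p) != 0)%R) (iota 0 (size p)).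
Proof.
elim: p h => [|x q IH] h.
  rewrite /iota /= height0 addr0 andbT; apply/idP/idP => [/eqP->//|]; lia.
rewrite [X in _ && X]all_iotaS all_iotaS take0 height0 addr0 le0z_nat andTb.
case: x; rewrite [rok _ _]/= [isF (nth _ _ 0)]/= ?implyFb ?implyTb ?andTb.
- rewrite IH; congr andb; first congr andb.
  + apply: eq_all => i /=; rewrite heightC /=; apply/idP/idP; lia.
  + rewrite heightC /=; apply/idP/idP; lia.
  + apply: eq_all => i /=; rewrite heightC /=; apply/idP/idP; lia.
- rewrite IH.
  case: h => [|h]; first by rewrite /= !andbF.
  have -> : (h.+1%:Z != 0)%R by lia.
  rewrite !andTb; congr andb; first congr andb.
  + apply: eq_all => i /=; rewrite heightC /=; apply/idP/idP; lia.
  + rewrite heightC /=; apply/idP/idP; lia.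
  + apply: eq_all => i /=; rewrite heightC /=; apply/idP/idP; lia.
- case: h => [|h].
    rewrite all_iotaS /= take0 heightC height0 /=; done.
  rewrite [_ && rok _ _]/= IH; congr andb; first congr andb.
  + apply: eq_all => i /=; rewrite heightC /=; apply/idP/idP; lia.
  + rewrite heightC /=; apply/idP/idP; lia.
  + apply: eq_all => i /=; rewrite heightC /=; apply/idP/idP; lia.
Qed.

Lemma forall_iota m (f : nat -> bool) :
  [forall i : 'I_m, f i] = all f (iota 0 m).
Proof.
apply/forallP/allP => [H i|H i]; last by apply: H; rewrite mem_iota0.
by rewrite mem_iota0 => hi; exact: (H (Ordinal hi)).
Qed.

Lemma riordan_rok p : riordan p = rok 0 p.
Proof.
rewrite rokE /riordan /motzkin.
rewrite (forall_iota _ (fun i => (0 <= height (take i p))%R)).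
rewrite (forall_iota _ (fun i => (nth U p i == F) ==> (height (take i p) != 0)%R)).
rewrite add0r; congr andb; first congr andb.
- by apply: eq_all => i; rewrite add0r.
- by apply: eq_all => i; rewrite add0r eqFE.
Qed.


Lemma sum_step (G : step -> nat) : \sum_(x : step) G x = G U + G F + G D.
Proof.
rewrite (bigD1 U) // (bigD1 F); last by apply/eqP.
rewrite (bigD1 D); last by apply/andP; split; apply/eqP.
rewrite big_pred0 => [|x]; first by rewrite /= addn0 !addnA.
by case: x; rewrite eqxx ?andbF ?andFb.
Qed.

Lemma card_tuple0 (P : seq step -> bool) :
  #|[set t : 0.-tuple step | P t]| = P [::].
Proof.
case: (boolP (P [::])) => H.
  have -> : [set t : 0.-tuple step | P t] = setT.
    by apply/setP => t; rewrite !inE (tuple0 t).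
  by rewrite cardsT card_tuple expn0.
have -> : [set t : 0.-tuple step | P t] = set0.
  by apply/setP => t; rewrite !inE (tuple0 t) /= (negbTE H).
by rewrite cards0.
Qed.

Lemma card_tupleS n (P : seq step -> bool) :
  #|[set t : n.+1.-tuple step | P t]| =
  #|[set t : n.-tuple step | P (U :: t)]| + #|[set t : n.-tuple step | P (F :: t)]|
  + #|[set t : n.-tuple step | P (D :: t)]|.
Proof.
rewrite -!sum1dep_card.
rewrite (reindex (fun p : step * n.-tuple step => [tuple of p.1 :: p.2])) /=; last first.
  exists (fun t : n.+1.-tuple step => (thead t, [tuple of behead t])) => [[x t] _|t _] /=.
    by congr pair; apply: val_inj.
  by apply: val_inj; rewrite /= [t in RHS]tuple_eta.
rewrite -(pair_big_dep xpredT (fun x (t : n.-tuple step) => P (x :: t)) (fun _ _ => 1)) /=.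
by rewrite sum_step.
Qed.

Fixpoint rc n h := if n is m.+1 then rc m h.+1 + (if h is h'.+1 then rc m h + rc m h' else 0)
  else (h == 0 : nat).
Fixpoint mc n h := if n is m.+1 then mc m h.+1 + mc m h + (if h is h'.+1 then mc m h' else 0)
  else (h == 0 : nat).
Fixpoint ac n a := if n is m.+1 then ac m a.+1 + (if a is a'.+1 then mc m a' else 0)
  else (a == 0 : nat).

Lemma mc_rc n h : mc n h = rc n h + rc n h.+1.
Proof.
elim: n h => [|n IH] h; first by case: h.
rewrite /= !IH; case: h => [|h] /=; rewrite ?IH; lia.
Qed.

Lemma ac_rc n a : ac n a = rc n a.
Proof.
elim: n a => [|n IH] a //=.
case: a => [|a]; rewrite IH ?mc_rc /=; lia.
Qed.

Lemma card_false n : #|[set t : n.-tuple step | false]| = 0.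
Proof. by apply/eqP; rewrite cards_eq0; apply/eqP/setP => t; rewrite inE. Qed.

Lemma card_rok n h : #|[set t : n.-tuple step | rok h t]| = rc n h.
Proof.
elim: n h => [|n IH] h; first by rewrite card_tuple0.
rewrite card_tupleS /= IH; case: h => [|h] /=; rewrite ?card_false ?IH //.
all: lia.
Qed.

Lemma card_mok n h : #|[set t : n.-tuple step | mok h t]| = mc n h.
Proof.
elim: n h => [|n IH] h; first by rewrite card_tuple0.
rewrite card_tupleS /= !IH; case: h => [|h] /=; rewrite ?card_false ?IH //; lia.
Qed.

Lemma card_wok n a : #|[set t : n.-tuple step | wok a t]| = ac n a.
Proof.
elim: n a => [|n IH] a; first by rewrite card_tuple0.
rewrite card_tupleS /= IH card_false addn0; case: a => [|a] /=.
  by rewrite card_false.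
by rewrite card_mok.
Qed.


Lemma sorted_mkseq (f : nat -> nat) K :
  (forall t1 t2, t1 < t2 -> t2 < K -> f t1 < f t2) -> sorted ltn (mkseq f K).
Proof.
move=> H; apply: (homo_sorted_in (P := fun i => i < K)); last exact: iota_ltn_sorted.
  by move=> x y hx hy /= hxy; apply: H.
by apply/allP => i; rewrite mem_iota0.
Qed.

Lemma pos_enum (P : pred step) (w : seq step) (K : nat) (phi : nat -> nat) :
 (forall t, t < K -> phi t < size w /\ P (nth U w (phi t))) ->
 (forall m, m < size w -> P (nth U w m) -> exists2 t, t < K & phi t = m) ->
 (forall t1 t2, t1 < t2 -> t2 < K -> phi t1 < phi t2) ->
 count P w = K /\ (forall t, t < K -> pos P t w = phi t).
Proof.
move=> Ha Hb Hc.
have s1 : sorted ltn (mkseq phi K) by apply: sorted_mkseq.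
have s2 : sorted ltn (mkseq (fun t => pos P t w) (count P w)).
  by apply: sorted_mkseq => t1 t2; apply: pos_lt.
have e : mkseq phi K =i mkseq (fun t => pos P t w) (count P w).
  move=> m; apply/mapP/mapP => [[t ht ->]|[c hc ->]].
    rewrite mem_iota0 in ht; have [h1 h2] := Ha t ht.
    have [h3 h4] := pos_of h1 h2.
    by exists (count P (take (phi t) w)); rewrite ?mem_iota0.
  rewrite mem_iota0 in hc.
  have [t ht e] := Hb _ (pos_size hc) (pos_nth hc).
  by exists t; rewrite ?mem_iota0.
have E := irr_sorted_eq ltn_trans ltnn s1 s2 e.
have hK : count P w = K by have := congr1 size E; rewrite !size_mkseq.
split => // t ht.
have := congr1 (fun s => nth 0 s t) E; rewrite /= !nth_mkseq ?hK //.
Qed.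


Definition cell_pos (i t : nat) (w : seq step) : nat :=
  match i with 0 => pos isU t w | 1 => pos isD t w | i'.+2 => pos isF i' w end.

Lemma indiagE k j i t : 0 < k ->
  in_diagram (kk1 k j) i t = ((i < 2) && (t < k)) || ((1 < i) && (i < j.+2) && (t == 0)).
Proof.
move=> hk; rewrite /in_diagram /=.
case: i => [|[|i]] /=; rewrite ?orbF //.
rewrite size_nseq nth_nseq !ltnS.
by case: (i < j) => //=; case: t.
Qed.

Lemma sumn_kk1 k j : sumn (kk1 k j) = k + (k + j).
Proof. by rewrite /= sumn_nseq mul1n. Qed.


Lemma core_facts k j w : size w = k + (k + j) -> count isU w = k -> Pos w ->
  count isD w = k /\ count isF w = j.
Proof.
move=> hs hU [hUD _ _]; have := count3 w; rewrite hs -hUD hU; lia.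
Qed.

Lemma core_size k j w i t : 0 < k -> size w = k + (k + j) -> count isU w = k -> Pos w ->
  in_diagram (kk1 k j) i t -> cell_pos i t w < size w.
Proof.
move=> hk hs hU hP; have [hD hF] := core_facts hs hU hP.
rewrite indiagE // => H.
case: i H => [|[|i]] /= H; apply: pos_size; lia.
Qed.

Lemma core_lt k j w i1 t1 i2 t2 : 0 < k -> size w = k + (k + j) -> count isU w = k -> Pos w ->
  in_diagram (kk1 k j) i1 t1 -> in_diagram (kk1 k j) i2 t2 ->
  ((i1 == i2) && (t1 < t2)) || ((t1 == t2) && (i1 < i2)) ->
  cell_pos i1 t1 w < cell_pos i2 t2 w.
Proof.
move=> hk hs hU hP; have [hD hF] := core_facts hs hU hP.
case: hP => _ hUD hDF.
rewrite !indiagE //.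
case: i1 => [|[|i1]]; case: i2 => [|[|i2]] /= H1 H2 Ho.
- have [h1 h2] : t1 < t2 /\ t2 < k by lia.
  by apply: pos_lt; rewrite ?hU.
- have e : t1 = t2 by lia.
  by rewrite e; apply: hUD; rewrite hU; lia.
- have e1 : t1 = 0 by lia.
  have hj : i2 < j by lia.
  have [h3 h4] := hDF (ltac:(lia) : 0 < count isF w).
  have h5 : pos isU 0 w < pos isD 0 w by apply: hUD; rewrite hU.
  have h6 : pos isF 0 w <= pos isF i2 w by apply: pos_le; rewrite ?hF.
  rewrite e1; lia.
- lia.
- have [h1 h2] : t1 < t2 /\ t2 < k by lia.
  by apply: pos_lt; rewrite ?hD.
- have e1 : t1 = 0 by lia.
  have hj : i2 < j by lia.
  have [h3 h4] := hDF (ltac:(lia) : 0 < count isF w).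
  have h6 : pos isF 0 w <= pos isF i2 w by apply: pos_le; rewrite ?hF.
  rewrite e1; lia.
- lia.
- lia.
- have [h1 h2] : i1 < i2 /\ i2 < j by lia.
  by apply: pos_lt; rewrite ?hF.
Qed.

Lemma core_inj k j w i1 t1 i2 t2 : 0 < k -> size w = k + (k + j) -> count isU w = k -> Pos w ->
  in_diagram (kk1 k j) i1 t1 -> in_diagram (kk1 k j) i2 t2 ->
  cell_pos i1 t1 w = cell_pos i2 t2 w -> i1 = i2 /\ t1 = t2.
Proof.
move=> hk hs hU hP; have [hD hF] := core_facts hs hU hP.
rewrite !indiagE //.
case: i1 => [|[|i1]]; case: i2 => [|[|i2]] /= H1 H2 e.
- by split => //; apply: (pos_inj _ _ e); lia.
- by case: (UD_disj (ltac:(lia) : t1 < count isU w) (ltac:(lia) : t2 < count isD w) e).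
- by case: (UF_disj (ltac:(lia) : t1 < count isU w) (ltac:(lia) : i2 < count isF w) e).
- by case: (UD_disj (ltac:(lia) : t2 < count isU w) (ltac:(lia) : t1 < count isD w) (esym e)).
- by split => //; apply: (pos_inj _ _ e); lia.
- by case: (DF_disj (ltac:(lia) : t1 < count isD w) (ltac:(lia) : i2 < count isF w) e).
- by case: (UF_disj (ltac:(lia) : t2 < count isU w) (ltac:(lia) : i1 < count isF w) (esym e)).
- by case: (DF_disj (ltac:(lia) : t2 < count isD w) (ltac:(lia) : i1 < count isF w) (esym e)).
- have e' : i1 = i2 by apply: (pos_inj _ _ e); lia.
  split; [by rewrite e' | lia].
Qed.

Definition gmap (k j : nat) (w : seq step) :
  {ffun 'I_(size (kk1 k j)) * 'I_(nth 0 (kk1 k j) 0) -> 'I_(sumn (kk1 k j)).+1} :=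
  [ffun c : ('I_(size (kk1 k j)) * 'I_(nth 0 (kk1 k j) 0))%type => if in_diagram (kk1 k j) c.1 c.2 then inord (cell_pos c.1 c.2 w).+1 else ord0].

Lemma gmapE k j w (c : ('I_(size (kk1 k j)) * 'I_(nth 0 (kk1 k j) 0))%type) : 0 < k ->
  size w = k + (k + j) -> count isU w = k -> Pos w ->
  in_diagram (kk1 k j) c.1 c.2 -> val (gmap k j w c) = (cell_pos c.1 c.2 w).+1.
Proof.
move=> hk hs hU hP H; rewrite ffunE H; apply: inordK; rewrite ltnS sumn_kk1 -hs.
exact: (core_size hk hs hU hP H).
Qed.

Lemma gmap_syt k j w : 0 < k -> size w = k + (k + j) -> count isU w = k -> Pos w ->
  is_syt (gmap k j w).
Proof.
move=> hk hs hU hP.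
apply/andP; split; first (apply/andP; split).
- apply/forallP => c; case: ifP => H; first by rewrite (gmapE hk hs hU hP H).
  by rewrite ffunE H.
- apply/forallP => c1; apply/forallP => c2; apply/implyP => /andP [/andP [H1 H2] /eqP e].
  have := congr1 val e; rewrite !(gmapE hk hs hU hP) // => -[e'].
  have [a b] := core_inj hk hs hU hP H1 H2 e'.
  case: c1 c2 a b {e e' H1 H2} => [x1 y1] [x2 y2] /= a b.
  by rewrite xpair_eqE; apply/andP; split; apply/eqP/val_inj.
- apply/forallP => c1; apply/forallP => c2; apply/implyP => /andP [/andP [H1 H2] Ho].
  rewrite !(gmapE hk hs hU hP) // ltnS.
  exact: (core_lt hk hs hU hP H1 H2 Ho).
Qed.


Notation cell la := ('I_(size la) * 'I_(nth 0 la 0))%type.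

Lemma syt_pos la (T : {ffun 'I_(size la) * 'I_(nth 0 la 0) -> 'I_(sumn la).+1}) :
  is_syt T -> forall c : cell la, in_diagram la c.1 c.2 -> 0 < T c.
Proof.
case/andP => /andP [/forallP H _] _ c Hc; by have := H c; rewrite Hc.
Qed.

Lemma syt_zero la (T : {ffun 'I_(size la) * 'I_(nth 0 la 0) -> 'I_(sumn la).+1}) :
  is_syt T -> forall c : cell la, ~~ in_diagram la c.1 c.2 -> val (T c) = 0.
Proof.
case/andP => /andP [/forallP H _] _ c Hc; by have := H c; rewrite (negbTE Hc) => /eqP.
Qed.

Lemma syt_inj la (T : {ffun 'I_(size la) * 'I_(nth 0 la 0) -> 'I_(sumn la).+1}) :
  is_syt T -> forall c1 c2 : cell la, in_diagram la c1.1 c1.2 -> in_diagram la c2.1 c2.2 ->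
  T c1 = T c2 -> c1 = c2.
Proof.
case/andP => /andP [_ /forallP H] _ c1 c2 H1 H2 e.
have := H c1 => /forallP /(_ c2); rewrite H1 H2 e eqxx /= => /eqP //.
Qed.

Lemma syt_lt la (T : {ffun 'I_(size la) * 'I_(nth 0 la 0) -> 'I_(sumn la).+1}) :
  is_syt T -> forall c1 c2 : cell la, in_diagram la c1.1 c1.2 -> in_diagram la c2.1 c2.2 ->
  ((val c1.1 == val c2.1) && (val c1.2 < val c2.2)) ||
  ((val c1.2 == val c2.2) && (val c1.1 < val c2.1)) -> val (T c1) < val (T c2).
Proof.
case/andP => _ /forallP H c1 c2 H1 H2 Ho.
by have := H c1 => /forallP /(_ c2); rewrite H1 H2 Ho.
Qed.

Lemma sum1_ordn k : \sum_(i < k) 1 = k.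
Proof. by rewrite -[RHS]card_ord -sum1_card. Qed.

Lemma card_diag k j : 0 < k ->
  #|[set c : cell (kk1 k j) | in_diagram (kk1 k j) c.1 c.2]| = sumn (kk1 k j).
Proof.
case: k => // k hk; rewrite -sum1dep_card big_mkcond /=.
rewrite -(pair_bigA _ (fun (i : 'I_(size (kk1 k.+1 j))) (t : 'I_(nth 0 (kk1 k.+1 j) 0)) => if in_diagram (kk1 k.+1 j) i t then 1 else 0)) /=.
rewrite (eq_bigr (fun i : 'I_(size (kk1 k.+1 j)) => if val i < 2 then k.+1 else 1)); last first.
  move=> i _; case: ifP => hi.
    rewrite -[RHS]sum1_ordn; apply: eq_bigr => t _; rewrite indiagE // hi ltn_ord //.
  rewrite big_ord_recl indiagE // hi /=.
  have hi2 : val i < j.+2 by apply: (leq_trans (ltn_ord i)); rewrite /= size_nseq.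
  have hi1 : 1 < val i by move: hi; lia.
  rewrite hi1 hi2 /= big1 // => t _; rewrite indiagE // hi hi1 hi2 /=.
  by rewrite /bump /=.
rewrite !big_ord_recl /= sumn_nseq mul1n.
by rewrite sum1_ordn; congr (_ + (_ + _)); apply: size_nseq.
Qed.

Lemma syt_surj k j (T : {ffun cell (kk1 k j) -> 'I_(sumn (kk1 k j)).+1}) :
  0 < k -> is_syt T -> forall m, m < sumn (kk1 k j) ->
  exists2 c : cell (kk1 k j), in_diagram (kk1 k j) c.1 c.2 & val (T c) = m.+1.
Proof.
move=> hk HT.
set Dg := [set c : cell (kk1 k j) | in_diagram (kk1 k j) c.1 c.2].
have hinj : {in Dg &, injective T}.
  by move=> c1 c2; rewrite !inE; apply: syt_inj.
have E : T @: Dg = [set v : 'I_(sumn (kk1 k j)).+1 | 0 < v].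
  apply/eqP; rewrite eqEcard; apply/andP; split.
    apply/subsetP => v /imsetP [c Hc ->]; rewrite !inE in Hc *.
    exact: syt_pos.
  rewrite card_in_imset // card_diag //.
  have -> : [set v : 'I_(sumn (kk1 k j)).+1 | 0 < v] = [set~ ord0].
    by apply/setP => v; rewrite !inE lt0n -val_eqE.
  by rewrite cardsC1 card_ord.
move=> m hm.
have : (inord m.+1 : 'I_(sumn (kk1 k j)).+1) \in T @: Dg.
  by rewrite E inE inordK.
case/imsetP => c Hc e; rewrite inE in Hc.
by exists c => //; rewrite -e /= inordK.
Qed.

Definition rowof k j (T : {ffun cell (kk1 k j) -> 'I_(sumn (kk1 k j)).+1}) (m : nat) : nat :=
  if [pick c | val (T c) == m.+1] is Some c then val c.1 else 0.

Definition letter (i : nat) : step := match i with 0 => U | 1 => D | _ => F end.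

Definition fword k j (T : {ffun cell (kk1 k j) -> 'I_(sumn (kk1 k j)).+1}) : seq step :=
  mkseq (fun m => letter (rowof T m)) (sumn (kk1 k j)).

Lemma rowof_spec k j (T : {ffun cell (kk1 k j) -> 'I_(sumn (kk1 k j)).+1}) :
  is_syt T -> forall c : cell (kk1 k j), in_diagram (kk1 k j) c.1 c.2 ->
  rowof T (val (T c)).-1 = val c.1.
Proof.
move=> HT c Hc; have hp := syt_pos HT Hc.
rewrite /rowof; case: pickP => [c' /eqP e|none].
  rewrite prednK // in e.
  have Hc' : in_diagram (kk1 k j) c'.1 c'.2.
    apply/negPn/negP => H; have := syt_zero HT H; rewrite e => h.
    by rewrite h in hp.
  by rewrite (syt_inj HT Hc' Hc (val_inj e)).
by have := none c; rewrite prednK // eqxx.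
Qed.

Lemma T_bound k j (T : {ffun cell (kk1 k j) -> 'I_(sumn (kk1 k j)).+1}) (c : cell (kk1 k j)) :
  is_syt T -> in_diagram (kk1 k j) c.1 c.2 -> (val (T c)).-1 < sumn (kk1 k j).
Proof.
move=> HT Hc; have hp := syt_pos HT Hc; have := ltn_ord (T c).
by rewrite -(prednK hp) ltnS.
Qed.

Lemma nth_fword k j (T : {ffun cell (kk1 k j) -> 'I_(sumn (kk1 k j)).+1}) (c : cell (kk1 k j)) :
  is_syt T -> in_diagram (kk1 k j) c.1 c.2 ->
  nth U (fword T) (val (T c)).-1 = letter (val c.1).
Proof.
move=> HT Hc; rewrite /fword nth_mkseq ?(rowof_spec HT Hc) //.
exact: T_bound.
Qed.

Lemma enum_T k j (T : {ffun cell (kk1 k j) -> 'I_(sumn (kk1 k j)).+1})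
  (P : pred step) (K : nat) (cf : nat -> cell (kk1 k j)) :
  0 < k -> is_syt T ->
  (forall t, t < K -> in_diagram (kk1 k j) (cf t).1 (cf t).2 /\ P (letter (val (cf t).1))) ->
  (forall c : cell (kk1 k j), in_diagram (kk1 k j) c.1 c.2 -> P (letter (val c.1)) ->
     exists2 t, t < K & cf t = c) ->
  (forall t1 t2, t1 < t2 -> t2 < K -> val (T (cf t1)) < val (T (cf t2))) ->
  count P (fword T) = K /\ (forall t, t < K -> pos P t (fword T) = (val (T (cf t))).-1).
Proof.
move=> hk HT Ha Hb Hc.
apply: pos_enum.
- move=> t ht; have [H1 H2] := Ha t ht; split.
    by rewrite size_mkseq; apply: T_bound.
  by rewrite nth_fword.
- move=> m; rewrite size_mkseq => hm.
  have [c Hc' e] := syt_surj hk HT hm.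
  have -> : m = (val (T c)).-1 by rewrite e.
  rewrite nth_fword // => HP.
  have [t ht e'] := Hb c Hc' HP.
  by exists t => //; rewrite e'.
- move=> t1 t2 h12 h2.
  have h := Hc t1 t2 h12 h2.
  have [H1 _] := Ha t1 (ltn_trans h12 h2).
  have hp := syt_pos HT H1.
  by rewrite -ltnS (prednK hp) (ltn_predK h).
Qed.

Definition mkcell k' j (i t : nat) : cell (kk1 k'.+1 j) := (inord i, inord t).

Lemma mkcell_v1 k' j i t : i < j.+2 -> val (mkcell k' j i t).1 = i.
Proof. by move=> h; rewrite /= inordK //= size_nseq. Qed.

Lemma mkcell_v2 k' j i t : t < k'.+1 -> val (mkcell k' j i t).2 = t.
Proof. by move=> h; rewrite /= inordK. Qed.

Lemma mkcell_n1 k' j i t : i < j.+2 -> nat_of_ord (mkcell k' j i t).1 = i.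
Proof. exact: mkcell_v1. Qed.

Lemma mkcell_n2 k' j i t : t < k'.+1 -> nat_of_ord (mkcell k' j i t).2 = t.
Proof. exact: mkcell_v2. Qed.

Lemma mkcell_eta k' j (c : cell (kk1 k'.+1 j)) : c = mkcell k' j (val c.1) (val c.2).
Proof. by case: c => a b; congr pair; apply/val_inj; rewrite /= inordK. Qed.

Lemma mkcell_etaE k' j (c : cell (kk1 k'.+1 j)) i t :
  nat_of_ord c.1 = i -> nat_of_ord c.2 = t -> c = mkcell k' j i t.
Proof. move=> <- <-; exact: mkcell_eta. Qed.

Lemma indiag_bound k' j (c : cell (kk1 k'.+1 j)) : val c.1 < j.+2.
Proof. by apply: (leq_trans (ltn_ord c.1)); rewrite /= size_nseq. Qed.

Lemma fword_U k' j (T : {ffun cell (kk1 k'.+1 j) -> 'I_(sumn (kk1 k'.+1 j)).+1}) :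
  is_syt T -> count isU (fword T) = k'.+1 /\
  (forall t, t < k'.+1 -> pos isU t (fword T) = (val (T (mkcell k' j 0 t))).-1).
Proof.
move=> HT; apply: (enum_T (cf := fun t => mkcell k' j 0 t)) => //.
- move=> t ht; rewrite ?mkcell_v1 ?mkcell_n1 // ?mkcell_v2 ?mkcell_n2 // indiagE // ht.
- move=> c; rewrite indiagE // => Hc.
  case E: (val c.1) => [|[|i]] //= _.
  rewrite E /= in Hc.
  exists (val c.2); first exact: ltn_ord.
  by rewrite {2}(mkcell_eta c) E.
- move=> t1 t2 h12 h2; apply: syt_lt => //.
  + by rewrite ?mkcell_n1 // ?mkcell_n2 // ?indiagE //; lia.
  + by rewrite ?mkcell_n1 // ?mkcell_n2 // ?indiagE //; lia.
  + by rewrite ?mkcell_v1 // ?mkcell_v2 //; lia.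
Qed.

Lemma fword_D k' j (T : {ffun cell (kk1 k'.+1 j) -> 'I_(sumn (kk1 k'.+1 j)).+1}) :
  is_syt T -> count isD (fword T) = k'.+1 /\
  (forall t, t < k'.+1 -> pos isD t (fword T) = (val (T (mkcell k' j 1 t))).-1).
Proof.
move=> HT; apply: (enum_T (cf := fun t => mkcell k' j 1 t)) => //.
- move=> t ht; rewrite ?mkcell_v1 ?mkcell_n1 // ?mkcell_v2 ?mkcell_n2 // indiagE // ht.
- move=> c; rewrite indiagE // => Hc.
  case E: (val c.1) => [|[|i]] //= _.
  exists (val c.2); first exact: ltn_ord.
  by rewrite {2}(mkcell_eta c) E.
- move=> t1 t2 h12 h2; apply: syt_lt => //.
  + by rewrite ?mkcell_n1 // ?mkcell_n2 // ?indiagE //; lia.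
  + by rewrite ?mkcell_n1 // ?mkcell_n2 // ?indiagE //; lia.
  + by rewrite ?mkcell_v1 // ?mkcell_v2 //; lia.
Qed.

Lemma fword_F k' j (T : {ffun cell (kk1 k'.+1 j) -> 'I_(sumn (kk1 k'.+1 j)).+1}) :
  is_syt T -> count isF (fword T) = j /\
  (forall t, t < j -> pos isF t (fword T) = (val (T (mkcell k' j t.+2 0))).-1).
Proof.
move=> HT; apply: (enum_T (cf := fun t => mkcell k' j t.+2 0)) => //.
- move=> t ht; rewrite ?mkcell_v1 ?mkcell_n1 ?ltnS // ?mkcell_v2 ?mkcell_n2 // indiagE //=. by rewrite !ltnS ht.
- move=> c; rewrite indiagE // => Hc.
  case E: (val c.1) => [|[|i]] //= _.
  rewrite E /= in Hc.
  have [hi hc] : i < j /\ val c.2 = 0 by move: Hc; rewrite !ltnS; case/andP => -> /eqP.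
  exists i => //.
  by rewrite {1}(mkcell_eta c) E hc.
- move=> t1 t2 h12 h2; apply: syt_lt => //.
  + by rewrite ?mkcell_n1 ?ltnS // ?mkcell_n2 // ?indiagE //=; lia.
  + by rewrite ?mkcell_n1 ?ltnS // ?mkcell_n2 // ?indiagE //=; lia.
  + by rewrite ?mkcell_v1 ?ltnS // ?mkcell_v2 //; lia.
Qed.

Lemma cell_pos0 t w : cell_pos 0 t w = pos isU t w. Proof. by []. Qed.
Lemma cell_pos1 t w : cell_pos 1 t w = pos isD t w. Proof. by []. Qed.
Lemma cell_pos2 i t w : cell_pos i.+2 t w = pos isF i w. Proof. by []. Qed.

Lemma gmap_fword k' j (T : {ffun cell (kk1 k'.+1 j) -> 'I_(sumn (kk1 k'.+1 j)).+1}) :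
  is_syt T -> gmap k'.+1 j (fword T) = T.
Proof.
move=> HT; apply/ffunP => c; rewrite ffunE; case: ifP => Hc; last first.
  by apply/val_inj; rewrite /= (syt_zero HT) ?Hc.
have hp := syt_pos HT Hc.
have [_ hU] := fword_U HT; have [_ hD] := fword_D HT; have [_ hF] := fword_F HT.
suff -> : cell_pos c.1 c.2 (fword T) = (val (T c)).-1 by rewrite prednK // inord_val.
have Hc' := Hc; rewrite indiagE // in Hc'.
case E: (nat_of_ord c.1) Hc' => [|[|i]] H.
- by rewrite cell_pos0 hU ?ltn_ord // -(mkcell_etaE E erefl).
- by rewrite cell_pos1 hD ?ltn_ord // -(mkcell_etaE E erefl).
- have [hi hc] : i < j /\ nat_of_ord c.2 = 0.
    by move: H; rewrite /= !ltnS => /andP [-> /eqP].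

  by rewrite cell_pos2 hF // -(mkcell_etaE E hc).
Qed.

Lemma fword_Pos k' j (T : {ffun cell (kk1 k'.+1 j) -> 'I_(sumn (kk1 k'.+1 j)).+1}) :
  is_syt T -> Pos (fword T).
Proof.
move=> HT.
have [cU hU] := fword_U HT; have [cD hD] := fword_D HT; have [cF hF] := fword_F HT.
split.
- by rewrite cU cD.
- move=> t; rewrite cU => ht; rewrite hU // hD //.
  have h1 : in_diagram (kk1 k'.+1 j) (mkcell k' j 0 t).1 (mkcell k' j 0 t).2.
    by rewrite ?mkcell_n1 // ?mkcell_n2 // indiagE // ht.
  have h2 : in_diagram (kk1 k'.+1 j) (mkcell k' j 1 t).1 (mkcell k' j 1 t).2.
    by rewrite ?mkcell_n1 // ?mkcell_n2 // indiagE // ht.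
  have hp := syt_pos HT h1.
  have := syt_lt HT h1 h2; rewrite ?mkcell_v1 // ?mkcell_v2 // eqxx /= => /(_ isT).
  by move=> h; rewrite -ltnS (prednK hp) (ltn_predK h).
- rewrite cF cD => hj; split => //.
  rewrite hD // hF //.
  have h1 : in_diagram (kk1 k'.+1 j) (mkcell k' j 1 0).1 (mkcell k' j 1 0).2.
    by rewrite ?mkcell_n1 // ?mkcell_n2 // indiagE.
  have h2 : in_diagram (kk1 k'.+1 j) (mkcell k' j 2 0).1 (mkcell k' j 2 0).2.
    by rewrite ?mkcell_n1 ?ltnS // ?mkcell_n2 // indiagE //=; rewrite ?ltnS ?hj.
  have hp := syt_pos HT h1.
  have := syt_lt HT h1 h2; rewrite ?mkcell_v1 ?ltnS // ?mkcell_v2 // eqxx /= => /(_ isT).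
  by move=> h; rewrite -ltnS (prednK hp) (ltn_predK h).
Qed.


Lemma word_ext_P (P : pred step) w1 w2 m :
  count P w1 = count P w2 -> (forall c, c < count P w1 -> pos P c w1 = pos P c w2) ->
  m < size w1 -> P (nth U w1 m) -> P (nth U w2 m).
Proof.
move=> hc hp hm hP; have [h1 h2] := pos_of hm hP.
by rewrite -h2 hp // pos_nth // -hc.
Qed.

Lemma word_ext w1 w2 : size w1 = size w2 ->
  count isU w1 = count isU w2 -> (forall c, c < count isU w1 -> pos isU c w1 = pos isU c w2) ->
  count isD w1 = count isD w2 -> (forall c, c < count isD w1 -> pos isD c w1 = pos isD c w2) ->
  count isF w1 = count isF w2 -> (forall c, c < count isF w1 -> pos isF c w1 = pos isF c w2) ->
  w1 = w2.
Proof.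
move=> hs cU pU cD pD cF pF; apply: (eq_from_nth (x0 := U)) => // m hm.
case E: (nth U w1 m).
- have := word_ext_P cU pU hm; rewrite E => /(_ isT).
  by case: (nth U w2 m).
- have := word_ext_P cF pF hm; rewrite E => /(_ isT).
  by case: (nth U w2 m).
- have := word_ext_P cD pD hm; rewrite E => /(_ isT).
  by case: (nth U w2 m).
Qed.

Lemma fword_gmap k' j w : size w = k'.+1 + (k'.+1 + j) -> count isU w = k'.+1 -> Pos w ->
  fword (gmap k'.+1 j w) = w.
Proof.
move=> hs hU hP.
have HT := gmap_syt (ltn0Sn k') hs hU hP.
have [cD cF] := core_facts hs hU hP.
have [cU' pU] := fword_U HT; have [cD' pD] := fword_D HT; have [cF' pF] := fword_F HT.
apply: word_ext.
- by rewrite size_mkseq sumn_kk1 hs.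
- by rewrite cU' hU.
- move=> c; rewrite cU' => hc; rewrite pU // (gmapE (ltn0Sn k') hs hU hP) //.
  by rewrite ?mkcell_n1 // ?mkcell_n2 // indiagE // hc.
  by rewrite ?mkcell_v1 // ?mkcell_v2.
- by rewrite cD' cD.
- move=> c; rewrite cD' => hc; rewrite pD // (gmapE (ltn0Sn k') hs hU hP) //.
  by rewrite ?mkcell_n1 // ?mkcell_n2 // indiagE // hc.
  by rewrite ?mkcell_v1 // ?mkcell_v2.
- by rewrite cF' cF.
- move=> c; rewrite cF' => hc; rewrite pF // (gmapE (ltn0Sn k') hs hU hP) //.
  by rewrite ?mkcell_n1 ?ltnS // ?mkcell_n2 // indiagE //=; rewrite ?ltnS ?hc.
  by rewrite ?mkcell_n1 ?ltnS // ?mkcell_n2 // indiagE //=; rewrite ?ltnS ?hc.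
Qed.

Lemma fword_size k j (T : {ffun cell (kk1 k j) -> 'I_(sumn (kk1 k j)).+1}) :
  size (fword T) == sumn (kk1 k j).
Proof. by rewrite size_mkseq. Qed.

Lemma syt_card k' j : num_syt (kk1 k'.+1 j) =
  #|[set t : (sumn (kk1 k'.+1 j)).-tuple step | wok 0 t && (count isU t == k'.+1)]|.
Proof.
rewrite /num_syt.
set S := [set T | _].
set N := sumn (kk1 k'.+1 j).
set W := [set t : N.-tuple step | _].
have hN : N = k'.+1 + (k'.+1 + j) by rewrite /N sumn_kk1.
apply/eqP; rewrite eqn_leq; apply/andP; split.
- pose f (T : {ffun cell (kk1 k'.+1 j) -> 'I_N.+1}) : N.-tuple step := Tuple (fword_size T).
  have finj : {in S &, injective f}.
    move=> T1 T2; rewrite !inE => H1 H2 e.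
    have e' : fword T1 = fword T2 by have := congr1 val e.
    by rewrite -(gmap_fword H1) -(gmap_fword H2) e'.
  rewrite -(card_in_imset finj); apply: subset_leq_card.
  apply/subsetP => t /imsetP [T HT ->]; rewrite inE in HT; rewrite inE.
  have [cU _] := fword_U HT.
  have -> : (f T : seq step) = fword T by [].
  by rewrite cU eqxx andbT; apply: Pos_wok; apply: fword_Pos.
- pose g (t : N.-tuple step) : {ffun cell (kk1 k'.+1 j) -> 'I_N.+1} := gmap k'.+1 j t.
  have ginj : {in W &, injective g}.
    move=> t1 t2; rewrite !inE => /andP [w1 /eqP c1] /andP [w2 /eqP c2] e.
    apply: val_inj.
    change (tval t1 = tval t2).
    rewrite -(@fword_gmap k' j _ _ c1 (wok_Pos w1)); last by rewrite size_tuple.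
    rewrite -(@fword_gmap k' j _ _ c2 (wok_Pos w2)); last by rewrite size_tuple.
    by congr fword.
  rewrite -(card_in_imset ginj); apply: subset_leq_card.
  apply/subsetP => T /imsetP [t Ht ->]; rewrite inE in Ht; rewrite inE.
  case/andP: Ht => w /eqP c.
  apply: gmap_syt => //; last exact: wok_Pos.
  by rewrite size_tuple.
Qed.


Lemma card_partition n (P : seq step -> bool) :
  #|[set t : n.-tuple step | P t]| =
  \sum_(k < n.+1) #|[set t : n.-tuple step | P t && (count isU t == k)]|.
Proof.
rewrite -sum1dep_card (partition_big (fun t : n.-tuple step => (inord (count isU t) : 'I_n.+1)) xpredT) //.
apply: eq_bigr => k _; rewrite -sum1dep_card; apply: eq_bigl => t.
congr andb; rewrite -val_eqE /= inordK // ltnS.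
by apply: (leq_trans (count_size _ _)); rewrite size_tuple.
Qed.

Lemma W_zero n k : (k = 0 /\ 0 < n) \/ n < k + k ->
  #|[set t : n.-tuple step | wok 0 t && (count isU t == k)]| = 0.
Proof.
move=> H; apply/eqP; rewrite cards_eq0; apply/eqP/setP => t; rewrite !inE.
apply/negbTE/negP => /andP [w /eqP c].
have [hUD _ hF] := wok_Pos w.
have := count3 t; rewrite size_tuple => e.
case: (posnP (count isF t)) => hf.
  clear hF; move: e hUD c hf H; move: (count isU t) (count isD t) (count isF t) => a b d; lia.
have [h1 _] := hF hf; clear hF; move: e hUD c h1 H; move: (count isU t) (count isD t) (count isF t) => a b d; lia.
Qed.

Lemma card_len m1 m2 (P : seq step -> bool) : m1 = m2 ->
  #|[set t : m1.-tuple step | P t]| = #|[set t : m2.-tuple step | P t]|.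
Proof. by move=> ->. Qed.

Theorem corollary1p3 (n : nat) : 1 <= n ->
  riordan_number n = \sum_(1 <= k < (n./2).+1) num_syt (kk1 k (n - 2 * k)).
Proof.
move=> hn.
rewrite /riordan_number.
have -> : [set t : n.-tuple step | riordan t] = [set t : n.-tuple step | rok 0 t].
  by apply/setP => t; rewrite !inE riordan_rok.
rewrite card_rok -ac_rc -card_wok card_partition.
rewrite -(big_mkord xpredT (fun k => #|[set t : n.-tuple step | wok 0 t && (count isU t == k)]|)).
have h1 : 1 <= (n./2).+1 by [].
have h2 : (n./2).+1 <= n.+1 by rewrite ltn_half_double -addnn; lia.
rewrite (big_cat_nat (leq0n 1) (leq_trans h1 h2)) /= big_nat1 W_zero; last by left.
rewrite add0n (big_cat_nat h1 h2) /=.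
rewrite [X in _ + X = _]big_nat_cond [X in _ + X = _]big1 ?addn0; last first.
  move=> k /andP [/andP [hk _] _]; apply: W_zero; right.
  by move: hk; rewrite ltnNge geq_half_double -addnn; lia.
apply: eq_big_nat => k /andP [hk1 hk2].
case: k hk1 hk2 => // k' _ hk2.
rewrite (syt_card k' (n - 2 * k'.+1)).
apply: (card_len (fun t : seq step => wok 0 t && (count isU t == k'.+1))).
rewrite sumn_kk1.
by move: hk2; rewrite ltnS geq_half_double -addnn; lia.
Qed.
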